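(* Let $\mathcal{G}=(V,E,p)$ be an uncertain graph, $k,l_m,\theta$ positive integers, and $G_1,\dots,G_\theta$ independently sampled possible worlds. Let $V_1,\dots,V_k$ be the true top-$k$ node sets among those of size at least $l_m$ that are closed w.r.t. $\gamma$ (i.e. they are such closed sets with $\gamma(V_1)\ge\dots\ge\gamma(V_k)\ge\gamma(U)$ for every other closed set $U$ with $|U|\ge l_m$). For each $i$, let $\mathbf{G}(V_i)$ be the set of possible worlds $G$ of $\mathcal{G}$ such that $V_i$ is contained in some densest subgraph of $G$, and let $\mathbb{G}=\bigcup_{i=1}^k\mathbf{G}(V_i)$. Then $$\Pr\big(V_1,\dots,V_k\text{ are all closed w.r.t. }\widehat\gamma\big)\ \ge\ 1-\sum_{G\in\mathbb{G}}\big(1-\Pr(G)\big)^\theta.$$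
   Context: An uncertain graph $\mathcal{G}=(V,E,p)$ has finite node set $V$, undirected edge set $E$, and $p:E\to(0,1]$; a possible world $G=(V,E_G)$, $E_G\subseteq E$, has probability $\Pr(G)=\prod_{e\in E_G}p(e)\prod_{e\in E\setminus E_G}(1-p(e))$. Edge density: $\rho(G[W])=|E_G[W]|/|W|$ for nonempty $W\subseteq V$, with $E_G[W]$ the edges of $G$ inside $W$. A densest subgraph of $G$ is a nonempty $W\subseteq V$ maximizing $\rho(G[W])$. The densest subgraph containment probability of $U\subseteq V$ is $\gamma(U)=\sum_G\Pr(G)\cdot\mathbb{1}[\exists\,U'\supseteq U:\ U'\text{ is a densest subgraph of }G]$. Given independent samples $G_1,\dots,G_\theta$ drawn from $\Pr$, $\widehat\gamma(U)=\frac1\theta\#\{i: U\text{ is contained in some densest subgraph of }G_i\}$. A set $U\subseteq V$ is closed w.r.t. a function $f$ on subsets of $V$ if no proper superset $U'\supsetneq U$, $U'\subseteq V$, has $f(U')=f(U)$. *)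

(* Defs.v *)
From mathcomp Require Import all_boot all_order all_algebra.
Set Implicit Arguments. Unset Strict Implicit. Unset Printing Implicit Defensive.
Import Order.TTheory GRing.Theory Num.Theory.
Local Open Scope ring_scope.

(* An undirected edge is a 2-element set of nodes.
   An uncertain graph is (E, p) with E : {set {set T}} (every e in E has
   #|e| = 2) and p e in (0,1] for e in E.  A possible world is G \subset E. *)

Section Defs.
Variable R : realFieldType.
Variable T : finType.

Definition world_prob (E : {set {set T}}) (p : {set T} -> R)
    (G : {set {set T}}) : R :=
  (\prod_(e in G) p e) * \prod_(e in E :\: G) (1 - p e).

Definition edges_in (G : {set {set T}}) (W : {set T}) : {set {set T}} :=
  [set e in G | e \subset W].

Definition density (G : {set {set T}}) (W : {set T}) : R :=
  (#|edges_in G W|)%:R / (#|W|)%:R.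

Definition is_densest (G : {set {set T}}) (W : {set T}) : bool :=
  (W != set0) &&
  [forall W' : {set T}, (W' != set0) ==> (density G W' <= density G W)].

Definition in_densest (G : {set {set T}}) (U : {set T}) : bool :=
  [exists U' : {set T}, (U \subset U') && is_densest G U'].

Definition gamma (E : {set {set T}}) (p : {set T} -> R) (U : {set T}) : R :=
  \sum_(G in powerset E) world_prob E p G * (in_densest G U)%:R.

Definition gamma_hat (theta : nat) (S : {ffun 'I_theta -> {set {set T}}})
    (U : {set T}) : R :=
  (#|[set i | in_densest (S i) U]|)%:R / theta%:R.

Definition closed_wrt (f : {set T} -> R) (U : {set T}) : bool :=
  [forall U' : {set T}, (U \proper U') ==> (f U' != f U)].

Definition sample_prob (E : {set {set T}}) (p : {set T} -> R) (theta : nat)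
    (A : {ffun 'I_theta -> {set {set T}}} -> bool) : R :=
  \sum_(S : {ffun 'I_theta -> {set {set T}}} | [forall i, S i \subset E] && A S)
     \prod_(i < theta) world_prob E p (S i).

End Defs.

Definition worlds_containing (R : realFieldType) (T : finType) (E : {set {set T}}) (U : {set T}) :
    {set {set {set T}}} :=
  [set G in powerset E | @in_densest R T G U].

(* Main.v *)
Require Import Defs.
From mathcomp Require Import all_boot all_order all_algebra.
Import Order.TTheory GRing.Theory Num.Theory.
Local Open Scope ring_scope.

Section Aux.
Variable R : realFieldType.
Variable T : finType.
Variable E : {set {set T}}.
Variable p : {set T} -> R.
Hypothesis hp : forall e, e \in E -> 0 < p e <= 1.

Lemma wp_ge0 (G : {set {set T}}) : G \subset E -> 0 <= world_prob E p G.
Proof.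
move=> sGE; rewrite /world_prob; apply: mulr_ge0; apply: prodr_ge0 => e He.
- by case/andP: (hp _ (subsetP sGE _ He)) => /ltW.
- move: He; rewrite inE => /andP[_ He]; case/andP: (hp _ He) => _.
  by rewrite subr_ge0.
Qed.

Lemma wp_sum1 : \sum_(G in powerset E) world_prob E p G = 1.
Proof.
pose F e := if e \in E then p e else 0.
pose G e := if e \in E then 1 - p e else 1.
have h1 : \prod_e (F e + G e) = 1.
  rewrite big1 // => e _; rewrite /F /G; case: ifP => _.
    by rewrite addrC subrK.
  by rewrite add0r.
rewrite -h1 (bigA_distr 1 +%R F G).
rewrite [RHS](bigID (fun J : {set {set T}} => J \subset E)) /=.

rewrite [X in _ = _ + X]big1 ?addr0; last first.
  move=> J /negP nJ; have : ~~ (J \subset E) by apply/negP.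
  case/subsetPn => e eJ eE.
  by rewrite (bigD1 e) //= eJ /F (negbTE eE) mul0r.
apply: eq_big => [J|J]; first by rewrite powersetE.
rewrite powersetE => sJE.
rewrite (bigID (mem J)) /= /world_prob; congr (_ * _).
  by apply: eq_bigr => e eJ; rewrite eJ /F (subsetP sJE _ eJ).
rewrite [RHS](bigID (mem E)) /= [X in _ = _ * X]big1 ?mulr1; last first.
  by move=> e /andP[eJ eE]; rewrite (negbTE eJ) /G (negbTE eE).
apply: eq_big => [e|e]; first by rewrite in_setD.
rewrite in_setD => /andP[eJ eE].
by rewrite (negbTE eJ) /G eE.
Qed.

Lemma prod_sum (theta : nat) (P : pred {set {set T}}) :
  \sum_(S : {ffun 'I_theta -> {set {set T}}} | [forall i, P (S i)])
     \prod_(i < theta) world_prob E p (S i)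
  = (\sum_(H | P H) world_prob E p H) ^+ theta.
Proof.
rewrite -[in RHS](card_ord theta) -prodr_const bigA_distr_big.
apply: eq_bigl => S; apply/ffun_onP/forallP => h i; exact: h.
Qed.
End Aux.

Theorem theorem4 (R : realFieldType) (T : finType)
    (E : {set {set T}}) (p : {set T} -> R)
    (hE : forall e, e \in E -> #|e| = 2%N)
    (hp : forall e, e \in E -> 0 < p e <= 1)
    (k lm theta : nat) (hk : (0 < k)%N) (hlm : (0 < lm)%N) (htheta : (0 < theta)%N)
    (Vs : 'I_k -> {set T})
    (hinj : injective Vs)
    (hclosed : forall i, closed_wrt (gamma E p) (Vs i))
    (hsize : forall i, (lm <= #|Vs i|)%N)
    (hsorted : forall i j : 'I_k, (i <= j)%N -> gamma E p (Vs j) <= gamma E p (Vs i))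
    (htop : forall U : {set T}, closed_wrt (gamma E p) U -> (lm <= #|U|)%N ->
              (forall i, U != Vs i) -> forall i, gamma E p U <= gamma E p (Vs i)) :
  1 - \sum_(G in \bigcup_(i < k) worlds_containing R E (Vs i))
        (1 - world_prob E p G) ^+ theta
  <= @sample_prob R T E p theta
       (fun S => [forall i : 'I_k, closed_wrt (@gamma_hat R T theta S) (Vs i)]).
Proof.
set gg := \bigcup_(i < k) _.
set w := fun S : {ffun 'I_theta -> {set {set T}}} =>
  \prod_(i < theta) world_prob E p (S i).
set Om := fun S : {ffun 'I_theta -> {set {set T}}} => [forall i, S i \subset E].
set A := fun S : {ffun 'I_theta -> {set {set T}}} =>
  [forall i : 'I_k, closed_wrt (@gamma_hat R T theta S) (Vs i)].
have mono : forall (G : {set {set T}}) (U V : {set T}), V \subset U ->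
    in_densest R G U -> in_densest R G V.
  move=> G U V sVU /existsP[U'' /andP[sUU'' dU'']]; apply/existsP; exists U''.
  by rewrite (subset_trans sVU sUU'') dU''.
have gsub : forall G : {set {set T}}, G \in gg -> G \subset E.
  by move=> G /bigcupP[i _]; rewrite inE powersetE => /andP[].
have key : forall S : {ffun 'I_theta -> {set {set T}}}, [forall G in gg, [exists i, S i == G]] -> A S.
  move=> S /forallP hS; apply/forallP => j; apply/forallP => U'.
  apply/implyP => pjU.
  have sjU := proper_sub pjU.
  have neq := forallP (hclosed j) U'; rewrite pjU /= in neq.
  have : [exists G, [&& G \in powerset E, in_densest R G (Vs j)
                       & ~~ in_densest R G U']].
    move: neq; apply: contraNT => /existsPn h; apply/eqP; rewrite /gamma.
    apply: eq_bigr => G GE.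
    suff -> : in_densest R G U' = in_densest R G (Vs j) by [].
    apply/idP/idP; first exact: mono.
    by move=> hV; move: (h G); rewrite GE hV /= negbK.
  case/existsP => G /and3P[GE GV GU].
  have Ggg : G \in gg by apply/bigcupP; exists j => //; rewrite inE GE.
  have /existsP[i0 /eqP Si0] := implyP (hS G) Ggg.
  have hlt : (#|[set i | in_densest R (S i) U']| <
              #|[set i | in_densest R (S i) (Vs j)]|)%N.
    apply: proper_card; apply/properP; split.
      by apply/subsetP => i; rewrite !inE; apply: mono.
    by exists i0; rewrite !inE Si0 ?GV ?(negbTE GU).
  rewrite /gamma_hat; apply/negP => /eqP h.
  have thnz : (theta%:R : R)^-1 != 0 by rewrite invr_eq0 pnatr_eq0 -lt0n.
  move/(mulIf thnz)/eqP: h; rewrite eqr_nat => /eqP h.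
  by rewrite h ltnn in hlt.
have hw : forall S : {ffun 'I_theta -> {set {set T}}}, Om S -> 0 <= w S.
  move=> S /forallP hS; apply: prodr_ge0 => i _; exact: (@wp_ge0 R T E p hp).
have tot : \sum_(S | Om S) w S = 1.
  rewrite /Om /w (@prod_sum R T E p theta (fun H : {set {set T}} => H \subset E)).
  have -> : \sum_(H : {set {set T}} | H \subset E) world_prob E p H = 1.
    by rewrite -(@wp_sum1 R T E p); apply: eq_bigl => H; rewrite powersetE.
  by rewrite expr1n.
have comp : forall G : {set {set T}}, G \in gg ->
    \sum_(S | Om S && [forall i, S i != G]) w S = (1 - world_prob E p G) ^+ theta.
  move=> G Ggg.
  have -> : \sum_(S | Om S && [forall i, S i != G]) w S =
      \sum_(S : {ffun 'I_theta -> {set {set T}}} |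
              [forall i, (fun H : {set {set T}} => (H \subset E) && (H != G)) (S i)]) w S.
    apply: eq_bigl => S; apply/andP/forallP => [[/forallP h1 /forallP h2] i|h].
      by rewrite h1 h2.
    by split; apply/forallP => i; case/andP: (h i).
  rewrite /w (@prod_sum R T E p theta (fun H : {set {set T}} => (H \subset E) && (H != G))); congr (_ ^+ _).
  have := @wp_sum1 R T E p; rewrite (bigD1 G) ?powersetE ?gsub //= => h.
  apply: (addrI (world_prob E p G)); rewrite [RHS]addrC subrK.
  apply: etrans _ h; congr (_ + _); apply: eq_bigl => H; by rewrite powersetE.
rewrite lerBlDr -{1}tot (bigID A) /=; apply: lerD; first by [].
apply: (@le_trans _ _ (\sum_(S | Om S && ~~ A S)
   \sum_(G in gg) ([forall i, S i != G])%:R * w S)).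
  apply: ler_sum => S /andP[OS nA].
  have : ~~ [forall G in gg, [exists i, S i == G]].
    by apply: contra nA; exact: key.
  case/forallPn => G; rewrite negb_imply => /andP[Ggg /existsPn nex].
  rewrite (bigD1 G) //=.
  have -> : [forall i, S i != G] by apply/forallP.
  rewrite mul1r lerDl; apply: sumr_ge0 => H _.
  by apply: mulr_ge0 => //; apply: hw.
apply: (@le_trans _ _ (\sum_(S | Om S)
   \sum_(G in gg) ([forall i, S i != G])%:R * w S)).
  rewrite [X in _ <= X](bigID A) /= lerDr; apply: sumr_ge0 => S /andP[OS _].
  by apply: sumr_ge0 => G _; apply: mulr_ge0 => //; apply: hw.
rewrite exchange_big /=; apply: ler_sum => G Ggg; rewrite -comp //.
rewrite big_mkcondr /=; apply/ler_sum => S _.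
by case: ifP => _; rewrite ?mul1r ?mul0r.
Qed.
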